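(* The homogeneous $(-1)$-configurations are exactly: $\mathcal{L}(1,0,2,1)$ and $\mathcal{L}(2,0,5,1)$ (non-compound), and the compound ones $\mathcal{L}(3,0,3,2)$ (with $\delta=1,n=3,\mu_1=0,\mu_2=1$), $\mathcal{L}(12,0,6,5)$ (with $\delta=2,n=6,\mu_1=0,\mu_2=1$), $\mathcal{L}(21,0,7,8)$ (with $\delta=3,n=7,\mu_1=2,\mu_2=1$), and $\mathcal{L}(48,0,8,17)$ (with $\delta=6,n=8,\mu_1=3,\mu_2=2$).
   Context: Let $p_1,\dots,p_n$ be general points of $\mathbb{P}^2$, $\mathbb{P}'$ the blow-up with pulled-back line class $H$, exceptional curves $E_i$, canonical class $K=-3H+\sum E_i$. $\mathcal{L}(d,0,n,m)$ denotes the class $dH-m\sum_{i=1}^nE_i$ (plane curves of degree $d$ with multiplicity $m$ at $p_1,\dots,p_n$). A numerical $(-1)$-class is a class $A$ with $A^2=-1$ and $A\cdot K=-1$. A homogeneous $(-1)$-configuration is either (non-compound) a class $\mathcal{L}(d,0,n,m)$ which is itself a numerical $(-1)$-class, or (compound) a class of the form $\sum_{\sigma}A_\sigma$ where $n\ge2$, $A=\delta H-\mu_1E_1-\mu_2\sum_{i=2}^nE_i$ is a numerical $(-1)$-class with $\delta\ge1$, $\mu_1,\mu_2\ge0$, $\mu_1\ne\mu_2$, the $A_\sigma$ are the $n$ distinct classes obtained from $A$ by permuting $E_1,\dots,E_n$, and $A_\sigma\cdot A_\tau=0$ for $A_\sigma\neq A_\tau$; this sum is $\mathcal{L}(n\delta,0,n,\mu_1+(n-1)\mu_2)$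 (and necessarily $\mu_1=\mu_2\pm1$). *)

(* Defs.v *)
From mathcomp Require Import all_boot all_order all_algebra all_fingroup.
Set Implicit Arguments. Unset Strict Implicit. Unset Printing Implicit Defensive.
Import GRing.Theory Num.Theory.
Local Open Scope ring_scope.

(* Divisor classes on the blow-up P' of P^2 at n general points:
   the pair (a, b) stands for  a*H + \sum_i b_i * E_i  (Pic P' = Z^{1+n}). *)
Definition cls (n : nat) := (int * {ffun 'I_n -> int})%type.

(* intersection form: H^2 = 1, E_i^2 = -1, H.E_i = 0, E_i.E_j = 0 (i<>j) *)
Definition dotc n (A B : cls n) : int :=
  A.1 * B.1 - \sum_(i < n) A.2 i * B.2 i.

Definition Kc n : cls n := (-3, [ffun=> 1]).

Definition addc n (A B : cls n) : cls n :=
  (A.1 + B.1, [ffun i => A.2 i + B.2 i]).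
Definition zeroc n : cls n := (0, [ffun=> 0]).
Definition sumc n (s : seq (cls n)) : cls n := foldr (@addc n) (zeroc n) s.

Definition minus1_class n (A : cls n) : Prop :=
  dotc A A = -1 /\ dotc A (Kc n) = -1.

(* L(d,0,n,m) = d H - m \sum_{i=1}^n E_i *)
Definition Lcls (n d m : nat) : cls n := (d%:Z, [ffun=> - (m%:Z)]).

Definition permc n (s : {perm 'I_n}) (A : cls n) : cls n :=
  (A.1, [ffun i => A.2 (s i)]).

Definition orbitc n (A : cls n) : seq (cls n) :=
  undup [seq permc s A | s : {perm 'I_n}].

(* A = delta H - mu1 E_1 - mu2 \sum_{i>=2} E_i  (E_1 has index 0) *)
Definition Acls (n delta mu1 mu2 : nat) : cls n :=
  (delta%:Z, [ffun i : 'I_n => if val i == 0%N then - (mu1%:Z) else - (mu2%:Z)]).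

Definition compound_data (n delta mu1 mu2 : nat) : Prop :=
  [/\ (2 <= n)%N, (1 <= delta)%N, mu1 != mu2,
      minus1_class (Acls n delta mu1 mu2) &
      forall B C, B \in orbitc (Acls n delta mu1 mu2) ->
                  C \in orbitc (Acls n delta mu1 mu2) -> B != C -> dotc B C = 0].

Definition noncompound_conf (n d m : nat) : Prop := minus1_class (Lcls n d m).

Definition compound_conf (n d m : nat) : Prop :=
  exists delta mu1 mu2, compound_data n delta mu1 mu2 /\
    sumc (orbitc (Acls n delta mu1 mu2)) = Lcls n d m.

Definition homog_conf (n d m : nat) : Prop :=
  noncompound_conf n d m \/ compound_conf n d m.

(* Main.v *)
Require Import Defs.
From mathcomp Require Import all_boot all_order all_algebra all_fingroup zify ring lra.
Set Implicit Arguments. Unset Strict Implicit. Unset Printing Implicit Defensive.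
Import GRing.Theory Num.Theory.
Local Open Scope ring_scope.

Lemma card2 n (j k : 'I_n) : j != k ->
  #|[pred i : 'I_n | (i != j) && (i != k)]| = n.-2.
Proof.
move=> jk.
have H1 := cardD1 j 'I_n.
have H2 := cardD1 k [predD1 'I_n & j].
rewrite !inE eq_sym jk /= in H2.
rewrite card_ord inE in H1.
have -> : #|[pred i : 'I_n | (i != j) && (i != k)]| = #|[predD1 [predD1 'I_n & j] & k]|.
  by apply: eq_card => i; rewrite !inE andbC andbT.
rewrite H2 in H1; rewrite [in RHS]H1. by [].
Qed.

Lemma sum_if n (j : 'I_n) (a b : int) :
  \sum_(i < n) (if i == j then a else b) = a + b *+ n.-1.
Proof.
rewrite (bigD1 j) //= eqxx; congr (_ + _).
rewrite (eq_bigr (fun _ => b)); last by move=> i /negbTE ->.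
by rewrite sumr_const cardC1 card_ord.
Qed.

Lemma sum_if2 n (j k : 'I_n) (a b c d : int) : j != k ->
  \sum_(i < n) ((if i == j then a else b) * (if i == k then c else d)) =
   a * d + b * c + (b * d) *+ n.-2.
Proof.
move=> jk.
rewrite (bigD1 j) //= eqxx (negbTE jk) -addrA; congr (_ + _).
rewrite (bigD1 k) /=; last by rewrite eq_sym.
rewrite eqxx eq_sym (negbTE jk); congr (_ + _).
rewrite (eq_bigr (fun _ => b * d)); last first.
  by move=> i /andP[/negbTE -> /negbTE ->].
by rewrite sumr_const card2.
Qed.

Definition Aj n (d a b : nat) (j : 'I_n) : cls n :=
  (d%:Z, [ffun i => if i == j then - (a%:Z) else - (b%:Z)]).

Lemma dot_AjAj n d a b (j : 'I_n) :
  dotc (Aj d a b j) (Aj d a b j) = d%:Z ^+ 2 - (a%:Z ^+ 2 + b%:Z ^+ 2 *+ n.-1).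
Proof.
rewrite /dotc /=.
rewrite (eq_bigr (fun i => if i == j then a%:Z ^+ 2 else b%:Z ^+ 2)).
  by rewrite sum_if expr2.
by move=> i _; rewrite !ffunE; case: (i == j); rewrite mulrNN expr2.
Qed.

Lemma dot_AjK n d a b (j : 'I_n) :
  dotc (Aj d a b j) (Kc n) = - 3 * d%:Z + (a%:Z + b%:Z *+ n.-1).
Proof.
rewrite /dotc /=.
rewrite (eq_bigr (fun i => if i == j then - a%:Z else - b%:Z)).
  by rewrite sum_if mulNrn -(opprD (Posz a)) opprK.
by move=> i _; rewrite !ffunE mulr1.
Qed.

Lemma dot_AjAk n d a b (j k : 'I_n) : j != k ->
  dotc (Aj d a b j) (Aj d a b k) = d%:Z ^+ 2 - (2 * a%:Z * b%:Z + b%:Z ^+ 2 *+ n.-2).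
Proof.
move=> jk; rewrite /dotc /=.
rewrite (eq_bigr (fun i => (if i == j then - a%:Z else - b%:Z) * (if i == k then - a%:Z else - b%:Z))).
  rewrite sum_if2 // !mulrNN expr2 expr2; congr (_ - (_ + _)); ring.
by move=> i _; rewrite !ffunE.
Qed.

Lemma permc_Aj n (s : {perm 'I_n}) d a b j :
  permc s (Aj d a b j) = Aj d a b ((s^-1)%g j).
Proof.
rewrite /permc /Aj /=; congr pair; apply/ffunP => i; rewrite !ffunE.
by rewrite (canF_eq (permK s)).
Qed.

Lemma mem_orbit n d a b (j : 'I_n) B :
  reflect (exists k, B = Aj d a b k) (B \in orbitc (Aj d a b j)).
Proof.
rewrite /orbitc mem_undup; apply: (iffP mapP).
  by move=> [s _ ->]; exists ((s^-1)%g j); rewrite permc_Aj.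
move=> [k ->]; exists (tperm j k); first by rewrite mem_enum.
by rewrite permc_Aj tpermV tpermL.
Qed.

Lemma Aj_inj n d a b : a != b -> injective (@Aj n d a b).
Proof.
move=> ab j k E; have := congr1 (fun A : cls n => A.2 j) E; rewrite /= !ffunE eqxx.
case: eqP => // _ /eqP; rewrite eqr_opp => /eqP [] /eqP; by rewrite (negbTE ab).
Qed.

Lemma orbit_perm n d a b (j : 'I_n) : a != b ->
  perm_eq (orbitc (Aj d a b j)) (map (Aj d a b) (enum 'I_n)).
Proof.
move=> ab; apply: uniq_perm; first exact: undup_uniq.
  by rewrite map_inj_uniq ?enum_uniq //; exact: Aj_inj.
move=> B; apply/mem_orbit/mapP.
  by move=> [k ->]; exists k; rewrite ?mem_enum.
by move=> [k _ ->]; exists k.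
Qed.

Lemma sumcE n (s : seq (cls n)) :
  sumc s = (\sum_(x <- s) x.1, [ffun i => \sum_(x <- s) x.2 i]).
Proof.
elim: s => [|x s IH] /=.
  by rewrite /zeroc big_nil; congr pair; apply/ffunP => i; rewrite !ffunE big_nil.
rewrite IH /addc /= big_cons; congr pair; apply/ffunP => i; rewrite !ffunE big_cons.
by [].
Qed.

Lemma sum_orbit n d a b (j : 'I_n) : a != b ->
  sumc (orbitc (Aj d a b j)) =
   (d%:Z *+ n, [ffun=> - (a%:Z + b%:Z *+ n.-1)]).
Proof.
move=> ab; rewrite sumcE.
rewrite (perm_big _ (orbit_perm d j ab)) big_map big_enum /= sumr_const card_ord.
congr pair; apply/ffunP => i; rewrite !ffunE.
rewrite (perm_big _ (orbit_perm d j ab)) big_map big_enum /=.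
rewrite (eq_bigr (fun k => if k == i then - a%:Z else - b%:Z)).
  by rewrite sum_if mulNrn opprD.
by move=> k _; rewrite ffunE eq_sym.
Qed.
Lemma nc_Z (n d m : int) : (0 <= n)%R -> (0 <= d)%R -> (0 <= m)%R -> (d ^+ 2 + 1 = n * m ^+ 2)%R -> (3 * d = n * m + 1)%R ->
  (d <= 3)%R.
Proof.
move=> hn hd hm E1 E2.
have E3 : (m * (3 * d) = d ^+ 2 + 1 + m)%R by rewrite E2; nia.
have E4 : ((3 * d - 1) * (9 * m - 3 * d - 1) = 10)%R by nia.
have h1 : (2 <= 3 * d - 1)%R by lia.
have h2 : (1 <= 9 * m - 3 * d - 1)%R by nia.
nia.
Qed.
Lemma arith_nc (n d m : nat) : (d ^ 2 + 1 = n * m ^ 2)%N -> (3 * d = n * m + 1)%N ->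
  ((d,n,m) = (1,2,1) \/ (d,n,m)=(2,5,1))%N.
Proof.
move=> E1 E2.
have hd : (d <= 3)%N.
  have := @nc_Z (Posz n) (Posz d) (Posz m). lia.
have hm : (m <= 10)%N by nia.
have hn : (n <= 10)%N by nia.
move: E1 E2; clear -hd hm hn.
case: d hd => [|[|[|[|]]]] // _; case: m hm => [|[|[|[|[|[|[|[|[|[|[|]]]]]]]]]]] // _;
case: n hn => [|[|[|[|[|[|[|[|[|[|[|]]]]]]]]]]] // _; auto.
Qed.
Lemma arith_c (n de a b : nat) : (2 <= n)%N -> (1 <= de)%N -> a != b ->
  (de ^ 2 + 1 = a ^ 2 + n.-1 * b ^ 2)%N -> (3 * de = a + n.-1 * b + 1)%N ->
  (de ^ 2 = 2 * a * b + n.-2 * b ^ 2)%N ->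
  ((de, n, a, b) = (1, 3, 0, 1) \/ (de, n, a, b) = (2, 6, 0, 1) \/
        (de, n, a, b) = (3, 7, 2, 1) \/ (de, n, a, b) = (6, 8, 3, 2))%N.
Proof.
move=> hn hde ab E1 E2 E3.
case: n hn E1 E2 E3 => [|[|k]] // _ /= E1 E2 E3.
have F0 : ((a%:Z - b%:Z - 1) * (a%:Z - b%:Z + 1) = 0)%R.
  have : (a ^ 2 + b ^ 2 = 2 * a * b + 1)%N by lia.
  move=> H.
  nia.
have F : (a = b + 1 \/ b = a + 1)%N.
  move: F0 => /eqP; rewrite mulf_eq0 => /orP [] /eqP; lia.
case: F => [Ha|Hb].
  subst a.
  have Hd : (de * de = 3 * b * de)%N by nia.
  have {Hd} Hd : (de = 3 * b)%N.
    nia.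
  subst de.
  have H : ((7 - k) * b = 2)%N by nia.
  have hb : (b <= 2)%N by nia.
  have hk : (k <= 6)%N by nia.
  move: E1 E2 E3; clear -hb hk.
  case: b hb => [|[|[|]]] // _; case: k hk => [|[|[|[|[|[|[|[|]]]]]]]] // _; by auto.
subst b.
have G : (9 * de ^ 2 = (k.+2 * (a + 1)) ^ 2)%N.
  have -> : (k.+2 * (a + 1) = 3 * de)%N by lia.
  by rewrite expnMn.
have G2 : ((a + 1)%:Z * ((a + 1)%:Z * (k%:Z + 2) * (7 - k%:Z) - 18) = 0)%R by nia.
have H : ((a + 1)%:Z * (k%:Z + 2) * (7 - k%:Z) = 18)%R.
  move: G2 => /eqP; rewrite mulf_eq0 => /orP [] /eqP; lia.
have hk : (k <= 6)%N by nia.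
suff : ((de = 1 /\ k = 1 /\ a = 0) \/ (de = 2 /\ k = 4 /\ a = 0))%N.
  by case=> [[-> [-> ->]]|[-> [-> ->]]]; auto.
move: E1 E2 E3 H; clear -hk.
case: k hk => [|[|[|[|[|[|[|[|]]]]]]]] // _ /= E1 E2 E3 H; lia.
Qed.

Lemma Acls_Aj n d a b : Acls n.+1 d a b = Aj d a b ord0.
Proof. by rewrite /Acls /Aj; congr pair; apply/ffunP => i; rewrite !ffunE. Qed.

Lemma dot_LL n d m : dotc (Lcls n d m) (Lcls n d m) = d%:Z ^+ 2 - (m%:Z ^+ 2) *+ n.
Proof.
rewrite /dotc /= (eq_bigr (fun _ => m%:Z ^+ 2)).
  by rewrite sumr_const card_ord expr2.
by move=> i _; rewrite !ffunE mulrNN expr2.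
Qed.

Lemma dot_LK n d m : dotc (Lcls n d m) (Kc n) = - 3 * d%:Z + m%:Z *+ n.
Proof.
rewrite /dotc /= (eq_bigr (fun _ => - m%:Z)) ?sumr_const ?card_ord.
  by rewrite mulNrn opprK.
by move=> i _; rewrite !ffunE mulr1.
Qed.

Lemma nc_iff n d m : noncompound_conf n d m <->
  ((d, n, m) = (1, 2, 1) \/ (d, n, m) = (2, 5, 1))%N.
Proof.
split.
  rewrite /noncompound_conf /minus1_class dot_LL dot_LK => -[E1 E2].
  apply: arith_nc; lia.
by rewrite /noncompound_conf /minus1_class dot_LL dot_LK => -[] [-> -> ->].
Qed.

Lemma cd_intro n d a b : (2 <= n)%N -> (1 <= d)%N -> a != b ->
  (d ^ 2 + 1 = a ^ 2 + n.-1 * b ^ 2)%N -> (3 * d = a + n.-1 * b + 1)%N ->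
  (d ^ 2 = 2 * a * b + n.-2 * b ^ 2)%N -> compound_data n d a b.
Proof.
case: n => // n hn hd ab E1 E2 E3.
rewrite /compound_data /minus1_class Acls_Aj dot_AjAj dot_AjK; split => //.
  split; lia.
move=> B C /mem_orbit [k ->] /mem_orbit [l ->] kl.
rewrite dot_AjAk; first by lia.
by apply: contraNneq kl => ->.
Qed.

Lemma cd_elim n d a b : compound_data n d a b ->
  (2 <= n)%N /\ (1 <= d)%N /\ a != b /\
  (d ^ 2 + 1 = a ^ 2 + n.-1 * b ^ 2)%N /\ (3 * d = a + n.-1 * b + 1)%N /\
  (d ^ 2 = 2 * a * b + n.-2 * b ^ 2)%N.
Proof.
case: n => [|n] [] //; case: n => [|n] //.
rewrite /minus1_class Acls_Aj dot_AjAj dot_AjK => hn hd ab [E1 E2] Orth.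
have k1 : (1 < n.+2)%N by [].
set j := Ordinal k1.
have jn : (ord0 : 'I_n.+2) != j by [].
have Orth' : forall x y : 'I_n.+2, x != y -> dotc (Aj d a b x) (Aj d a b y) = 0.
  move=> x y xy.
  have h1 : Aj d a b x \in orbitc (Aj d a b ord0) by apply/mem_orbit; exists x.
  have h2 : Aj d a b y \in orbitc (Aj d a b ord0) by apply/mem_orbit; exists y.
  have h3 : Aj d a b x != Aj d a b y by apply: contra xy => /eqP /Aj_inj ->.
  exact: Orth h1 h2 h3.
have E3' : (d ^ 2 = 2 * a * b + n * b ^ 2)%N.
  suff H : dotc (Aj d a b ord0) (Aj d a b j) = 0 by move: H; rewrite dot_AjAk //=; move=> H; lia.
  exact: Orth'.
do 5 (split; first by try lia).
by [].
Qed.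

Lemma cd_iff n de a b : compound_data n de a b <->
       ((de, n, a, b) = (1, 3, 0, 1) \/ (de, n, a, b) = (2, 6, 0, 1) \/
        (de, n, a, b) = (3, 7, 2, 1) \/ (de, n, a, b) = (6, 8, 3, 2))%N.
Proof.
split.
  move/cd_elim => [h1 [h2 [h3 [E1 [E2 E3]]]]]; exact: arith_c.
by case=> [[-> -> -> ->]|[[-> -> -> ->]|[[-> -> -> ->]|[-> -> -> ->]]]];
  apply: cd_intro.
Qed.

Lemma cd_sum n d a b : compound_data n d a b ->
  sumc (orbitc (Acls n d a b)) = Lcls n (n * d) (a + n.-1 * b).
Proof.
case: n => [|n]; first by case.
move=> /cd_elim [_ [_ [ab _]]].
rewrite Acls_Aj sum_orbit //.
by congr pair; [lia | apply/ffunP => i; rewrite !ffunE; lia].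
Qed.

Lemma Lcls_inj n d m d' m' : (0 < n)%N -> Lcls n d m = Lcls n d' m' -> d = d' /\ m = m'.
Proof.
case: n => // n _ [E1 E2]; split; first lia.
have := congr1 (fun f : {ffun 'I_n.+1 -> int} => f ord0) E2; rewrite /= !ffunE; lia.
Qed.

Local Close Scope ring_scope.

Theorem proposition5p4 :
  (forall n d m : nat,
     homog_conf n d m <->
     ((d, n, m) = (1, 2, 1) \/ (d, n, m) = (2, 5, 1) \/ (d, n, m) = (3, 3, 2) \/
      (d, n, m) = (12, 6, 5) \/ (d, n, m) = (21, 7, 8) \/ (d, n, m) = (48, 8, 17))%N)
  /\ (forall n d m : nat,
       noncompound_conf n d m <-> ((d, n, m) = (1, 2, 1) \/ (d, n, m) = (2, 5, 1))%N)
  /\ (forall n delta mu1 mu2 : nat,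
       compound_data n delta mu1 mu2 <->
       ((delta, n, mu1, mu2) = (1, 3, 0, 1) \/ (delta, n, mu1, mu2) = (2, 6, 0, 1) \/
        (delta, n, mu1, mu2) = (3, 7, 2, 1) \/ (delta, n, mu1, mu2) = (6, 8, 3, 2))%N).
Proof.
split; last by split; [exact: nc_iff | exact: cd_iff].
move=> n d m; split.
  case=> [/nc_iff [H|H] | [de [a [b [CD S]]]]]; [by left | by right; left |].
  have hn : (0 < n)%N by case: (cd_elim CD) => h _; lia.
  have [hd hm] := Lcls_inj hn (etrans (esym (cd_sum CD)) S).
  subst d m; right; right.
  by case/cd_iff: CD => [[-> -> -> ->]|[[-> -> -> ->]|[[-> -> -> ->]|[-> -> -> ->]]]]; auto.
case=> [H|[H|H]].
- by left; apply/nc_iff; left.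
- by left; apply/nc_iff; right.
right.
case: H => [[-> -> ->]|[[-> -> ->]|[[-> -> ->]|[-> -> ->]]]].
- have CD : compound_data 3 1 0 1 by apply/cd_iff; auto.
  by exists 1, 0, 1; split => //; rewrite (cd_sum CD).
- have CD : compound_data 6 2 0 1 by apply/cd_iff; auto.
  by exists 2, 0, 1; split => //; rewrite (cd_sum CD).
- have CD : compound_data 7 3 2 1 by apply/cd_iff; auto.
  by exists 3, 2, 1; split => //; rewrite (cd_sum CD).
- have CD : compound_data 8 6 3 2 by apply/cd_iff; auto.
  by exists 6, 3, 2; split => //; rewrite (cd_sum CD).
Qed.
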